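(* Let $w\in W$ and $\alpha\in\Phi^+\cap w\Phi^-$ with $\ell(\sigma_\alpha w)=\ell(w)-1$. For $\beta\in(\Phi^+\cap w\Phi^-)\setminus\{\alpha\}$ define $\psi(\beta)=\beta-\alpha$ if $(\alpha,\beta)=1$, $\beta-\alpha\in\Phi^+$, and $\beta-\alpha\notin\Phi^+\cap w\Phi^-$; and $\psi(\beta)=\beta$ otherwise. Then $\psi$ is a bijection from $(\Phi^+\cap w\Phi^-)\setminus\{\alpha\}$ onto $\Phi^+\cap(\sigma_\alpha w)\Phi^-$. If moreover $w^{-1}\alpha\in-\Pi$, then $\Phi^+\cap(\sigma_\alpha w)\Phi^-=(\Phi^+\cap w\Phi^-)\setminus\{\alpha\}$.
   Context: $\Phi$ is a simply laced root system with positive roots $\Phi^+$, $\Phi^-=-\Phi^+$, simple roots $\Pi$, Weyl group $W$, length $\ell$, reflections $\sigma_\alpha$; the scalar product is normalized so that $(\alpha,\alpha)=2$ for all roots. *)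

(* Defs.v *)
(* Roots are column vectors in R^n (R a real field) with the
   standard dot product; Weyl group elements are n x n matrices acting by
   left multiplication. *)
From HB Require Import structures.
From mathcomp Require Import all_boot all_order all_algebra.
From Stdlib Require Import ClassicalDescription.
Set Implicit Arguments. Unset Strict Implicit. Unset Printing Implicit Defensive.
Import Order.TTheory GRing.Theory Num.Theory.
Local Open Scope ring_scope.

Section RootSystems.
Variables (R : realFieldType) (n : nat).
Implicit Types (u v a b : 'cV[R]_n) (Phi Pi : seq 'cV[R]_n) (w : 'M[R]_n).

Definition dot u v : R := (u^T *m v) 0 0.

(* matrix of the reflection sigma_a : v |-> v - (a,v) a  (valid as (a,a)=2) *)
Definition refl_mx a : 'M[R]_n := 1%:M - a *m a^T.

Definition simply_laced_root_system Phi : Prop :=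
  [/\ 0 \notin Phi,
      forall a, a \in Phi -> dot a a = 2,
      forall a b, a \in Phi -> b \in Phi -> refl_mx a *m b \in Phi &
      forall a b, a \in Phi -> b \in Phi -> exists z : int, dot a b = z%:~R].

Definition pos_comb Pi v : Prop :=
  exists c : 'I_(size Pi) -> R,
    (forall i, 0 <= c i) /\ v = \sum_(i < size Pi) c i *: Pi`_i.

Definition simple_system Phi Pi : Prop :=
  [/\ {subset Pi <= Phi},
      (forall c : 'I_(size Pi) -> R,
          \sum_(i < size Pi) c i *: Pi`_i = 0 -> forall i, c i = 0) &
      forall b, b \in Phi -> pos_comb Pi b \/ pos_comb Pi (- b)].

Definition is_pos Phi Pi b : Prop := b \in Phi /\ pos_comb Pi b.
Definition is_neg Phi Pi b : Prop := is_pos Phi Pi (- b).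

Definition wprod (s : seq 'cV[R]_n) : 'M[R]_n :=
  foldr (fun a M => refl_mx a *m M) 1%:M s.

Definition in_weyl Phi w : Prop :=
  exists s : seq 'cV[R]_n, {subset s <= Phi} /\ w = wprod s.

Definition has_word Pi w (k : nat) : Prop :=
  exists s : seq 'cV[R]_n, [/\ size s = k, {subset s <= Pi} & w = wprod s].
Definition ell_is Pi w (k : nat) : Prop :=
  has_word Pi w k /\ forall j : nat, (j < k)%N -> ~ has_word Pi w j.

Definition in_wneg Phi Pi w b : Prop :=
  exists g, is_neg Phi Pi g /\ b = w *m g.

Definition inv_set Phi Pi w b : Prop := is_pos Phi Pi b /\ in_wneg Phi Pi w b.

Definition psi Phi Pi w a b : 'cV[R]_n :=
  if excluded_middle_informative
       [/\ dot a b = 1, is_pos Phi Pi (b - a) & ~ inv_set Phi Pi w (b - a)]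
  then b - a else b.

End RootSystems.

(* Main.v *)
Require Import Defs.
From HB Require Import structures.
From mathcomp Require Import all_boot all_order all_algebra.
From mathcomp Require Import zify ring lra.
From Stdlib Require Import ClassicalDescription.
Import Order.TTheory GRing.Theory Num.Theory.
Local Open Scope ring_scope.

Lemma dotDr {R : realFieldType} {n : nat} (u v x : 'cV[R]_n) :
  dot u (v + x) = dot u v + dot u x.
Proof. by rewrite /dot mulmxDr mxE. Qed.
Lemma dotNr {R : realFieldType} {n : nat} (u v : 'cV[R]_n) :
  dot u (- v) = - dot u v.
Proof. by rewrite /dot mulmxN mxE. Qed.
Lemma dotZr {R : realFieldType} {n : nat} (k : R) (u v : 'cV[R]_n) :
  dot u (k *: v) = k * dot u v.
Proof. by rewrite /dot -scalemxAr mxE. Qed.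
Lemma dotC {R : realFieldType} {n : nat} (u v : 'cV[R]_n) :
  dot u v = dot v u.
Proof.
by rewrite /dot -[u^T *m v]trmxK trmx_mul trmxK mxE.
Qed.
Lemma dotDl {R : realFieldType} {n : nat} (u v x : 'cV[R]_n) :
  dot (v + x) u = dot v u + dot x u.
Proof. by rewrite dotC dotDr !(dotC u). Qed.
Lemma dotNl {R : realFieldType} {n : nat} (u v : 'cV[R]_n) :
  dot (- v) u = - dot v u.
Proof. by rewrite dotC dotNr dotC. Qed.
Lemma dotZl {R : realFieldType} {n : nat} (k : R) (u v : 'cV[R]_n) :
  dot (k *: v) u = k * dot v u.
Proof. by rewrite dotC dotZr dotC. Qed.
Lemma dotBr {R : realFieldType} {n : nat} (u v x : 'cV[R]_n) :
  dot u (v - x) = dot u v - dot u x.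
Proof. by rewrite dotDr dotNr. Qed.
Lemma dotBl {R : realFieldType} {n : nat} (u v x : 'cV[R]_n) :
  dot (v - x) u = dot v u - dot x u.
Proof. by rewrite dotDl dotNl. Qed.

Lemma dot_ge0 {R : realFieldType} {n : nat} (u : 'cV[R]_n) : 0 <= dot u u.
Proof.
rewrite /dot mxE; apply: sumr_ge0 => i _; rewrite mxE; by rewrite -expr2 sqr_ge0.
Qed.
Lemma dot_eq0 {R : realFieldType} {n : nat} (u : 'cV[R]_n) : dot u u = 0 -> u = 0.
Proof.
rewrite /dot mxE => H; apply/matrixP => i j; rewrite (ord1 j) mxE.
have H0 : forall k, 0 <= (u^T) 0 k * u k 0.
  by move=> k; rewrite mxE -expr2 sqr_ge0.
have := @psumr_eq0P R _ xpredT (fun k => (u^T) 0 k * u k 0) (fun k _ => H0 k) H i isT.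
by rewrite mxE => /eqP; rewrite mulf_eq0 orbb => /eqP.
Qed.

Lemma mx11_dot {R : realFieldType} {n : nat} (u v : 'cV[R]_n) :
  u^T *m v = (dot u v)%:M.
Proof. exact: mx11_scalar. Qed.

Lemma reflE {R : realFieldType} {n : nat} (a v : 'cV[R]_n) :
  refl_mx a *m v = v - dot a v *: a.
Proof.
by rewrite /refl_mx mulmxBl mul1mx -mulmxA mx11_dot mul_mx_scalar.
Qed.

Lemma refl_tr {R : realFieldType} {n : nat} (a : 'cV[R]_n) :
  (refl_mx a)^T = refl_mx a.
Proof. by rewrite /refl_mx linearB /= trmx1 trmx_mul trmxK. Qed.

Lemma refl_invol {R : realFieldType} {n : nat} (a : 'cV[R]_n) :
  dot a a = 2 -> refl_mx a *m refl_mx a = 1%:M.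
Proof.
move=> Ha; rewrite /refl_mx mulmxBl mul1mx mulmxBr mulmx1.
rewrite -mulmxA (mulmxA a^T) mx11_dot Ha mul_scalar_mx -scalemxAr scalemxAl.
rewrite scaler_nat mulr2n. 
rewrite mulmxDl; set X := a *m a^T.
by rewrite opprB addrK subrK.
Qed.

Lemma reflD {R : realFieldType} {n : nat} (a : 'cV[R]_n) :
  refl_mx a = 1%:M - a *m a^T.
Proof. by []. Qed.

Lemma refl_conj {R : realFieldType} {n : nat} (q b : 'cV[R]_n) :
  dot q q = 2 ->
  refl_mx (refl_mx q *m b) = refl_mx q *m refl_mx b *m refl_mx q.
Proof.
move=> Hq.
have -> : refl_mx q *m refl_mx b *m refl_mx q = 1%:M - refl_mx q *m (b *m b^T) *m refl_mx q.
  by rewrite (reflD b) (mulmxBr (refl_mx q)) mulmx1 (mulmxBl (refl_mx q)) refl_invol.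
by rewrite (reflD (refl_mx q *m b)) trmx_mul refl_tr !mulmxA.
Qed.

Definition pb (P : Prop) : bool := if excluded_middle_informative P then true else false.
Lemma pbP (P : Prop) : reflect P (pb P).
Proof. by rewrite /pb; case: excluded_middle_informative => H; constructor. Qed.

Lemma refl_in {R : realFieldType} {n : nat} {Phi : seq 'cV[R]_n} :
  simply_laced_root_system Phi -> forall {a b}, a \in Phi -> b \in Phi -> refl_mx a *m b \in Phi.
Proof. by case. Qed.
Lemma dot2 {R : realFieldType} {n : nat} {Phi : seq 'cV[R]_n} :
  simply_laced_root_system Phi -> forall {a}, a \in Phi -> dot a a = 2.
Proof. by case. Qed.
Lemma not0 {R : realFieldType} {n : nat} {Phi : seq 'cV[R]_n} :
  simply_laced_root_system Phi -> forall {a}, a \in Phi -> a <> 0.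
Proof. by case=> h0 _ _ _ a ha e; rewrite -e ha in h0. Qed.

Lemma oppr_in {R : realFieldType} {n : nat} {Phi : seq 'cV[R]_n} :
  simply_laced_root_system Phi -> forall {b}, b \in Phi -> - b \in Phi.
Proof.
move=> h b hb; have := refl_in h hb hb.
by rewrite reflE (dot2 h hb) scaler_nat mulr2n opprD addrA subrr sub0r.
Qed.

Lemma pos_comb_add {R : realFieldType} {n : nat} {Pi : seq 'cV[R]_n} x y :
  pos_comb Pi x -> pos_comb Pi y -> pos_comb Pi (x + y).
Proof.
move=> [c [hc ->]] [d [hd ->]]; exists (fun i => c i + d i); split.
  by move=> i; rewrite addr_ge0.
by rewrite -big_split /=; apply: eq_bigr => i _; rewrite scalerDl.
Qed.

Lemma pos_neg_excl {R : realFieldType} {n : nat} {Phi Pi : seq 'cV[R]_n} :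
  simple_system Phi Pi -> forall {v}, pos_comb Pi v -> pos_comb Pi (- v) -> v = 0.
Proof.
move=> [_ hli _] v hv hnv.
have [c [hc ev]] := hv; have [d [hd env]] := hnv.
have H : \sum_(i < size Pi) (c i + d i) *: Pi`_i = 0.
  by rewrite -[RHS](subrr v) {1}ev env -big_split /=; apply: eq_bigr => i _; rewrite scalerDl.
have Hz := hli _ H.
rewrite ev big1 // => i _.
have := Hz i; have := hc i; have := hd i => h1 h2 h3.
have -> : c i = 0 by lra.
by rewrite scale0r.
Qed.

Lemma not_pos_neg {R : realFieldType} {n : nat} {Phi Pi : seq 'cV[R]_n} :
  simply_laced_root_system Phi -> simple_system Phi Pi ->
  forall {b}, is_pos Phi Pi b -> is_neg Phi Pi b -> False.
Proof.
move=> h hs b [hb pb1] [_ pb2].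
exact: (not0 h hb (pos_neg_excl hs pb1 pb2)).
Qed.

Lemma pos_or_neg {R : realFieldType} {n : nat} {Phi Pi : seq 'cV[R]_n} :
  simply_laced_root_system Phi -> simple_system Phi Pi ->
  forall {b}, b \in Phi -> is_pos Phi Pi b \/ is_neg Phi Pi b.
Proof.
move=> h [_ _ hpn] b hb; case: (hpn b hb) => H; [left | right]; split => //.
exact: oppr_in.
Qed.

Lemma is_negN {R : realFieldType} {n : nat} {Phi Pi : seq 'cV[R]_n} b :
  is_neg Phi Pi (- b) <-> is_pos Phi Pi b.
Proof. by rewrite /is_neg opprK. Qed.

Lemma pos_in {R : realFieldType} {n : nat} {Phi Pi : seq 'cV[R]_n} b :
  is_pos Phi Pi b -> b \in Phi.
Proof. by case. Qed.
Lemma neg_in {R : realFieldType} {n : nat} {Phi Pi : seq 'cV[R]_n} b :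
  simply_laced_root_system Phi -> is_neg Phi Pi b -> b \in Phi.
Proof. by move=> h [hb _]; rewrite -[b]opprK; apply: oppr_in. Qed.

Lemma pos_add {R : realFieldType} {n : nat} {Phi Pi : seq 'cV[R]_n} x y :
  is_pos Phi Pi x -> is_pos Phi Pi y -> x + y \in Phi -> is_pos Phi Pi (x + y).
Proof. by move=> [_ hx] [_ hy] hxy; split => //; apply: pos_comb_add. Qed.

Lemma neg_add {R : realFieldType} {n : nat} {Phi Pi : seq 'cV[R]_n} x y :
  simply_laced_root_system Phi ->
  is_neg Phi Pi x -> is_neg Phi Pi y -> x + y \in Phi -> is_neg Phi Pi (x + y).
Proof.
move=> h hx hy hxy; rewrite /is_neg opprD; apply: pos_add => //.
by rewrite -opprD; apply: oppr_in.
Qed.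

Lemma simple_idx {R : realFieldType} {n : nat} {Pi : seq 'cV[R]_n} {p} :
  p \in Pi -> exists j : 'I_(size Pi), Pi`_j = p.
Proof. move=> hp; have hi : (index p Pi < size Pi)%N by rewrite index_mem.
by exists (Ordinal hi); rewrite /= nth_index. Qed.

Lemma sum_delta {R : realFieldType} {n : nat} {Pi : seq 'cV[R]_n} (j : 'I_(size Pi)) (x : R) :
  \sum_(i < size Pi) (if i == j then x else 0) *: Pi`_i = x *: Pi`_j.
Proof.
rewrite (bigD1 j) //= eqxx big1 ?addr0 // => i /negbTE ->; exact: scale0r.
Qed.

Lemma simple_pos {R : realFieldType} {n : nat} {Phi Pi : seq 'cV[R]_n} :
  simple_system Phi Pi -> forall {p}, p \in Pi -> is_pos Phi Pi p.
Proof.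
move=> [hsub _ _] p hp; split; first exact: hsub.
have [j <-] := simple_idx hp.
exists (fun i => if i == j then 1 else 0); split.
  by move=> i; case: (i == j).
by rewrite sum_delta scale1r.
Qed.

Lemma refl_simple_pos {R : realFieldType} {n : nat} {Phi Pi : seq 'cV[R]_n} :
  simply_laced_root_system Phi -> simple_system Phi Pi ->
  forall {q b}, q \in Pi -> is_pos Phi Pi b -> b <> q -> is_pos Phi Pi (refl_mx q *m b).
Proof.
move=> h hs q b hq hb hbq.
have hs' := hs; case: hs' => [hsub hli _].
have hqP : q \in Phi by apply: hsub.
have hbP : b \in Phi by case: hb.
case: (pos_or_neg h hs (refl_in h hqP hbP)) => // -[_ [d [hd ed]]].
have [c [hc ec]] := hb.2.
have [j ej] := simple_idx hq.
set x := dot q b.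
pose e i := c i + d i - (if i == j then x else 0).
have H : \sum_(i < size Pi) e i *: Pi`_i = 0.
  under eq_bigr => i _ do rewrite /e scalerBl scalerDl.
  rewrite sumrB big_split /= sum_delta -ec -ed ej reflE -/x.
  by rewrite opprB addrA addrC !addrA addNr add0r subrr.
have Hz := hli _ H.
have hc0 : forall i, i != j -> c i = 0.
  move=> i hij; have := Hz i; rewrite /e (negbTE hij) subr0 => hcd.
  have := hc i; have := hd i; lra.
have eb : b = c j *: q.
  rewrite ec (bigD1 j) //= big1 ?addr0 ?ej // => i hij.
  by rewrite hc0 // scale0r.
have := dot2 h hbP; rewrite {1}eb dotZl {1}eb dotZr (dot2 h hqP) => e2.
have hcj : c j = 1.
  have := hc j; move: e2; nra.
by exfalso; apply: hbq; rewrite eb hcj scale1r.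
Qed.

Lemma dot_cases {R : realFieldType} {n : nat} {Phi : seq 'cV[R]_n} :
  simply_laced_root_system Phi -> forall {a c}, a \in Phi -> c \in Phi ->
  c <> a -> c <> - a -> dot a c = -1 \/ dot a c = 0 \/ dot a c = 1.
Proof.
move=> h a c ha hc hca hcna.
have [z hz] : exists z : int, dot a c = z%:~R by case: h => _ _ _; apply.
have ha2 := dot2 h ha; have hc2 := dot2 h hc.
have H1 : dot (c - a) (c - a) = 4 - 2 * dot a c.
  rewrite !dotBl !dotBr ha2 hc2 (dotC c a); lra.
have H2 : dot (c + a) (c + a) = 4 + 2 * dot a c.
  rewrite !dotDl !dotDr ha2 hc2 (dotC c a); lra.
have g1 := dot_ge0 (c - a); have g2 := dot_ge0 (c + a).
have n1 : dot a c != 2.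
  apply/eqP => e; apply: hca; apply/eqP; rewrite -subr_eq0; apply/eqP.
  apply: dot_eq0; rewrite H1 e; lra.
have n2 : dot a c != -2.
  apply/eqP => e; apply: hcna; apply/eqP; rewrite -subr_eq0 opprK; apply/eqP.
  apply: dot_eq0; rewrite H2 e; lra.
have zle : (z <= 2)%R by rewrite -(ler_int R) -hz; lra.
have zge : (-2 <= z)%R by rewrite -(ler_int R) -hz; lra.
have zn2 : z != 2 by apply: contraNneq n1 => ez; rewrite hz ez.
have zn2' : z != -2 by apply: contraNneq n2 => ez; rewrite hz ez.
have : z = -1 \/ z = 0 \/ z = 1 by move: zle zge zn2 zn2'; lia.
rewrite hz; by case=> [->|[->|->]]; [left|right;left|right;right].
Qed.

Lemma count_invol {T : eqType} (l : seq T) (f : T -> T) (P : pred T) :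
  uniq l -> (forall x, f (f x) = x) -> (forall x, x \in l -> f x \in l) ->
  count (fun x => P (f x)) l = count P l.
Proof.
move=> ul ff fl.
rewrite -(count_map f P).
have /permP -> // : perm_eq (map f l) l.
apply: uniq_perm => //; first by rewrite map_inj_uniq //; exact: (can_inj ff).
move=> x; apply/mapP/idP => [[y hy ->]|hx]; first exact: fl.
by exists (f x); [exact: fl | rewrite ff].
Qed.

Definition Ninv {R : realFieldType} {n : nat} (Phi Pi : seq 'cV[R]_n) (u : 'M[R]_n) c :=
  is_pos Phi Pi c /\ is_neg Phi Pi (u^T *m c).
Definition cnt {R : realFieldType} {n : nat} (Phi Pi : seq 'cV[R]_n) (u : 'M[R]_n) :=
  count (fun c => pb (Ninv Phi Pi u c)) (undup Phi).

Lemma mem_behead_cons {T : eqType} {q x : T} {s : seq T} : x \in s -> x \in q :: s.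
Proof. by move=> hx; rewrite inE hx orbT. Qed.

Lemma wprod_cons {R : realFieldType} {n : nat} (q : 'cV[R]_n) s :
  wprod (q :: s) = refl_mx q *m wprod s.
Proof. by []. Qed.

Lemma wprod_orth {R : realFieldType} {n : nat} {Phi : seq 'cV[R]_n} :
  simply_laced_root_system Phi -> forall {s}, {subset s <= Phi} ->
  (wprod s)^T *m wprod s = 1%:M /\ wprod s *m (wprod s)^T = 1%:M.
Proof.
move=> h s; elim: s => [|q s IH] hs /=; first by rewrite trmx1 mul1mx.
have hq : q \in Phi by apply: hs; rewrite inE eqxx.
have [IH1 IH2] := IH (fun x hx => hs x (mem_behead_cons hx)).
rewrite trmx_mul refl_tr; split.
  by rewrite mulmxA -(mulmxA _ (refl_mx q) (refl_mx q)) refl_invol ?(dot2 h hq) // mulmx1 IH1.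
by rewrite mulmxA -(mulmxA _ (wprod s) (wprod s)^T) IH2 mulmx1 refl_invol // (dot2 h hq).
Qed.

Lemma wprod_in {R : realFieldType} {n : nat} {Phi : seq 'cV[R]_n} :
  simply_laced_root_system Phi -> forall {s}, {subset s <= Phi} -> forall {c}, c \in Phi ->
  wprod s *m c \in Phi /\ (wprod s)^T *m c \in Phi.
Proof.
move=> h s; elim: s => [|q s IH] hs c hc /=; first by rewrite trmx1 mul1mx.
have hq : q \in Phi by apply: hs; rewrite inE eqxx.
have IH' := IH (fun x hx => hs x (mem_behead_cons hx)).
rewrite trmx_mul refl_tr -!mulmxA; split.
  by apply: (refl_in h hq); case: (IH' c hc).
by case: (IH' (refl_mx q *m c) (refl_in h hq hc)).
Qed.

Lemma in_wnegE {R : realFieldType} {n : nat} {Phi Pi : seq 'cV[R]_n} :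
  simply_laced_root_system Phi -> forall {s}, {subset s <= Phi} -> forall {b},
  in_wneg Phi Pi (wprod s) b <-> is_neg Phi Pi ((wprod s)^T *m b).
Proof.
move=> h s hs b; have [o1 o2] := wprod_orth h hs; split.
  by move=> [g [hg ->]]; rewrite mulmxA o1 mul1mx.
by move=> hn; exists ((wprod s)^T *m b); split => //; rewrite mulmxA o2 mul1mx.
Qed.

Lemma reflK {R : realFieldType} {n : nat} (q c : 'cV[R]_n) :
  dot q q = 2 -> refl_mx q *m (refl_mx q *m c) = c.
Proof. by move=> hq; rewrite mulmxA refl_invol // mul1mx. Qed.

Lemma refl_self {R : realFieldType} {n : nat} (q : 'cV[R]_n) :
  dot q q = 2 -> refl_mx q *m q = - q.
Proof. by move=> hq; rewrite reflE hq scaler_nat mulr2n opprD addrA subrr sub0r. Qed.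

Lemma exchange {R : realFieldType} {n : nat} {Phi Pi : seq 'cV[R]_n} :
  simply_laced_root_system Phi -> simple_system Phi Pi ->
  forall s, {subset s <= Pi} -> forall b, is_pos Phi Pi b ->
  is_neg Phi Pi ((wprod s)^T *m b) ->
  exists s', [/\ (size s' + 1 = size s)%N, {subset s' <= s} &
                 refl_mx b *m wprod s = wprod s'].
Proof.
move=> h hs; have hsub : {subset Pi <= Phi} by case: hs.
elim=> [|q s IH] hsP b hb /=.
  by rewrite trmx1 mul1mx => hn; case: (not_pos_neg h hs hb hn).
have hqPi : q \in Pi by apply: hsP; rewrite inE eqxx.
have hq : q \in Phi by apply: hsub.
have hq2 := dot2 h hq.
have hsP' : {subset s <= Pi} by move=> x hx; apply: hsP; rewrite inE hx orbT.
rewrite trmx_mul refl_tr -mulmxA => hn.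
have [ebq|nbq] := eqVneq b q.
  exists s; split => //; first by rewrite addn1.
    by move=> x hx; rewrite inE hx orbT.
  by rewrite ebq mulmxA refl_invol // mul1mx.
have nbq' : b <> q by apply/eqP.
have hb' := refl_simple_pos h hs hqPi hb nbq'.
have [s0 [e1 e2 e3]] := IH hsP' _ hb' hn.
exists (q :: s0); split => /=.
- by rewrite -e1 addSn.
- move=> x; rewrite !inE => /orP [->//|hx]; by rewrite e2 ?orbT.
- by rewrite -e3 refl_conj // !mulmxA refl_invol // mul1mx.
Qed.

Lemma cnt_step {R : realFieldType} {n : nat} {Phi Pi : seq 'cV[R]_n} :
  simply_laced_root_system Phi -> simple_system Phi Pi ->
  forall {s p}, {subset s <= Phi} -> p \in Pi ->
  is_pos Phi Pi ((wprod s)^T *m p) ->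
  cnt Phi Pi (refl_mx p *m wprod s) = (cnt Phi Pi (wprod s)).+1.
Proof.
move=> h hs s p hsP hp hpos.
have hsub : {subset Pi <= Phi} by case: hs.
have hpP : p \in Phi by apply: hsub.
have hp2 := dot2 h hpP.
have ppos := simple_pos hs hp.
set u := wprod s.
pose Q c := pb (Ninv Phi Pi u (refl_mx p *m c)).
have claim : {in undup Phi, (fun c => pb (Ninv Phi Pi (refl_mx p *m u) c)) =1 predU (pred1 p) Q}.
  move=> c; rewrite mem_undup => hc /=.
  rewrite /Q /Ninv trmx_mul refl_tr -mulmxA.
  have [->|ncp] := eqVneq c p.
    rewrite /=; apply/pbP; split => //.
    by rewrite refl_self // mulmxN is_negN.
  rewrite /=; apply/pbP/pbP => -[H1 H2]; split => //.
    by apply: (refl_simple_pos h hs hp H1); apply/eqP.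
  have [erp|nrp] := eqVneq (refl_mx p *m c) p.
    by rewrite erp in H2; case: (not_pos_neg h hs hpos H2).
  by rewrite -[c](reflK p c hp2); apply: (refl_simple_pos h hs hp H1); apply/eqP.
rewrite /cnt (eq_in_count claim).
have := count_predUI (pred1 p) Q (undup Phi).
have -> : count (predI (pred1 p) Q) (undup Phi) = 0%N.
  rewrite (eq_count (a2 := pred0)) ?count_pred0 // => c /=.
  apply/negbTE; apply/andP => -[/eqP -> /pbP [H1 _]].
  by move: H1; rewrite refl_self // => H1; apply: (not_pos_neg h hs ppos); rewrite /is_neg.
rewrite addn0 => ->.
rewrite count_uniq_mem ?undup_uniq // mem_undup hpP add1n.
congr S.
rewrite /Q (count_invol (undup Phi) (fun c => refl_mx p *m c) (fun c => pb (Ninv Phi Pi u c))) //.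
- by apply: undup_uniq.
- by move=> x; rewrite reflK.
- by move=> x; rewrite !mem_undup; apply: refl_in.
Qed.

Lemma cnt_min {R : realFieldType} {n : nat} {Phi Pi : seq 'cV[R]_n} :
  simply_laced_root_system Phi -> simple_system Phi Pi ->
  forall s, {subset s <= Pi} ->
  (forall j, (j < size s)%N -> ~ has_word Pi (wprod s) j) ->
  cnt Phi Pi (wprod s) = size s.
Proof.
move=> h hs; have hsub : {subset Pi <= Phi} by case: hs.
elim=> [|p s IH] hsP hmin /=.
  rewrite /cnt (eq_count (a2 := pred0)) ?count_pred0 // => c /=.
  apply/negbTE/pbP => -[H1 H2]; move: H2; rewrite trmx1 mul1mx => H2.
  exact: (not_pos_neg h hs H1 H2).
have hp : p \in Pi by apply: hsP; rewrite inE eqxx.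
have hsP' : {subset s <= Pi} by move=> x hx; apply: hsP; rewrite inE hx orbT.
have hsPhi : {subset s <= Phi} by move=> x hx; apply: hsub; apply: hsP'.
have hmin' : forall j, (j < size s)%N -> ~ has_word Pi (wprod s) j.
  move=> j hj [t [ht1 ht2 ht3]]; apply: (hmin j.+1); first by [].
  exists (p :: t); split => //=; first by rewrite ht1.
    by move=> x; rewrite inE => /orP [/eqP ->|hx] //; apply: ht2.
  by rewrite ht3.
have IH' := IH hsP' hmin'.
have hpP : p \in Phi by apply: hsub.
case: (pos_or_neg h hs (proj2 (wprod_in h hsPhi hpP))) => H.
  by rewrite cnt_step // IH'.
have [s' [e1 e2 e3]] := exchange h hs s hsP' p (simple_pos hs hp) H.
exfalso; apply: (hmin (size s')).
  by rewrite /= -e1 addn1 ltnS leqnSn.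
exists s'; split => //.
  by move=> x hx; apply: hsP'; apply: e2.
Qed.

Lemma cnt_ell {R : realFieldType} {n : nat} {Phi Pi : seq 'cV[R]_n} :
  simply_laced_root_system Phi -> simple_system Phi Pi ->
  forall w k, ell_is Pi w k ->
  exists s, [/\ {subset s <= Pi}, w = wprod s & cnt Phi Pi w = k].
Proof.
move=> h hs w k [[s [e1 e2 e3]] hmin]; exists s; split => //.
by rewrite e3 -e1; apply: cnt_min => //; rewrite e1 -e3.
Qed.

Lemma neq_R {R : realFieldType} :
  [/\ (0:R) <> -1, (0:R) <> 1, (-1:R) <> 1 & (1:R) <> -1].
Proof. split => H; lra. Qed.

Lemma dot_orth {R : realFieldType} {n : nat} (M : 'M[R]_n) (u v : 'cV[R]_n) :
  M^T *m M = 1%:M -> dot (M *m u) (M *m v) = dot u v.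
Proof. by move=> H; rewrite /dot trmx_mul -mulmxA (mulmxA M^T) H mul1mx. Qed.

Lemma psiT {R : realFieldType} {n : nat} (Phi Pi : seq 'cV[R]_n) w a b :
  [/\ dot a b = 1, is_pos Phi Pi (b - a) & ~ inv_set Phi Pi w (b - a)] ->
  psi Phi Pi w a b = b - a.
Proof. by rewrite /psi; case: excluded_middle_informative. Qed.
Lemma psiF {R : realFieldType} {n : nat} (Phi Pi : seq 'cV[R]_n) w a b :
  ~ [/\ dot a b = 1, is_pos Phi Pi (b - a) & ~ inv_set Phi Pi w (b - a)] ->
  psi Phi Pi w a b = b.
Proof. by rewrite /psi; case: excluded_middle_informative. Qed.

Theorem mainTheorem15 (R : realFieldType) (n : nat)
    (Phi Pi : seq 'cV[R]_n)
    (hPhi : simply_laced_root_system Phi) (hPi : simple_system Phi Pi)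
    (w : 'M[R]_n) (hw : in_weyl Phi w)
    (a : 'cV[R]_n) (ha : inv_set Phi Pi w a)
    (hl : exists k : nat, ell_is Pi w k /\ ell_is Pi (refl_mx a *m w) k.-1) :
  let A := fun b => inv_set Phi Pi w b /\ b <> a in
  let B := inv_set Phi Pi (refl_mx a *m w) in
  [/\ (forall b, A b -> B (psi Phi Pi w a b)),
      (forall b1 b2, A b1 -> A b2 ->
          psi Phi Pi w a b1 = psi Phi Pi w a b2 -> b1 = b2),
      (forall c, B c -> exists b, A b /\ psi Phi Pi w a b = c) &
      ((exists p, p \in Pi /\ invmx w *m a = - p) -> forall b, B b <-> A b)].
Proof.
move=> A B.
have h := hPhi; have hs := hPi.
have hsub : {subset Pi <= Phi} by case: hs.
have [k [hk1 hk2]] := hl.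
have [s [hsP ews cw]] := cnt_ell h hs _ _ hk1.
have [s2 [hsP2 ews2 cw2]] := cnt_ell h hs _ _ hk2.
have hsPhi : {subset s <= Phi} by move=> x hx; apply: hsub; apply: hsP.
have hsPhi2 : {subset s2 <= Phi} by move=> x hx; apply: hsub; apply: hsP2.
have [o1 o2] := wprod_orth h hsPhi; rewrite -ews in o1 o2.
have wtin : forall c, c \in Phi -> w^T *m c \in Phi.
  by move=> c hc; rewrite ews; case: (wprod_in h hsPhi hc).
have HA : forall b, inv_set Phi Pi w b <-> Ninv Phi Pi w b.
  move=> b; rewrite /inv_set /Ninv ews; split => -[H1 H2]; split => //.
    by apply/(in_wnegE h hsPhi).
  by apply/(in_wnegE h hsPhi).
have HB : forall b, B b <-> is_pos Phi Pi b /\ is_neg Phi Pi (w^T *m (refl_mx a *m b)).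
  move=> b; rewrite /B /inv_set ews2; split => -[H1 H2]; split => //.
    by move/(in_wnegE h hsPhi2): H2; rewrite -ews2 trmx_mul refl_tr -mulmxA.
  by apply/(in_wnegE h hsPhi2); rewrite -ews2 trmx_mul refl_tr -mulmxA.
have [apos aneg] : is_pos Phi Pi a /\ is_neg Phi Pi (w^T *m a) by apply/HA.
have aP : a \in Phi by case: apos.
have a2 := dot2 h aP.
pose A' b := Ninv Phi Pi w b /\ b <> a.
have HA' : forall b, A b <-> A' b.
  by move=> b; rewrite /A /A'; split => -[H1 H2]; split => //; apply/HA.
pose phi c := if pb (dot a c = -1 /\ ~ Ninv Phi Pi w c) then c + a else c.
have KB : forall c, B c -> A' (phi c) /\ psi Phi Pi w a (phi c) = c.
  move=> c /HB [cpos cneg].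
  have cP : c \in Phi by case: cpos.
  have wcP := wtin c cP.
  have nca : c <> a.
    move=> eca; move: cneg; rewrite eca refl_self // mulmxN is_negN => H.
    exact: (not_pos_neg h hs H aneg).
  have ncna : c <> - a.
    move=> eca; move: cpos; rewrite eca => H.
    by apply: (not_pos_neg h hs apos); rewrite /is_neg.
  move: cneg; rewrite reflE.
  case: (dot_cases h aP cP nca ncna) => [e|[e|e]]; rewrite e.
  - rewrite scaleN1r opprK => cneg.
    have [Nc|Nc] := boolP (pb (Ninv Phi Pi w c)).
      have Nc' := elimT (pbP _) Nc.
      have -> : phi c = c.
        by rewrite /phi; case: pbP => // -[_ []].
      split; first by split.
      by apply: psiF; rewrite e => -[]; case: (@neq_R R).
    have Nc' : ~ Ninv Phi Pi w c by move/pbP; rewrite (negbTE Nc).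
    have -> : phi c = c + a.
      by rewrite /phi; case: pbP => // -[]; split.
    have caP : c + a \in Phi.
      by have := refl_in h aP cP; rewrite reflE e scaleN1r opprK.
    split.
      split; first by split => //; apply: pos_add.
      move=> /eqP; rewrite -subr_eq0 addrK => /eqP c0.
      by apply: (not0 h cP).
    rewrite psiT ?addrK //; split.
    + by rewrite dotDr e a2; lra.
    + by [].
    + by move=> /HA.
  - rewrite scale0r subr0 => cneg.
    have -> : phi c = c.
      by rewrite /phi; case: pbP => // -[H _]; move: H; rewrite e; case: (@neq_R R).
    split; first by split.
    by by apply: psiF; rewrite e => -[]; case: (@neq_R R).
  - rewrite scale1r => cneg.
    have Nc : Ninv Phi Pi w c.
      split => //; have -> : w^T *m c = w^T *m (c - a) + w^T *m a.
        by rewrite -mulmxDr subrK.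
      apply: neg_add => //; by rewrite -mulmxDr subrK.
    have -> : phi c = c.
      by rewrite /phi; case: pbP => // -[H _]; move: H; rewrite e; case: (@neq_R R).
    split; first by split.
    apply: psiF => -[_ H1 H2]; apply: H2; apply/HA; split => //.
set l := undup Phi.
have ul : uniq l by apply: undup_uniq.
have cntA : count (fun b => pb (A' b)) l = k.-1.
  have := count_predUI (fun b => pb (A' b)) (pred1 a) l.
  have -> : count (predI (fun b => pb (A' b)) (pred1 a)) l = 0%N.
    rewrite (eq_count (a2 := pred0)) ?count_pred0 // => x /=.
    by apply/negbTE/andP => -[/pbP [_ H] /eqP].
  have -> : count (predU (fun b => pb (A' b)) (pred1 a)) l = k.
    rewrite -cw /cnt; apply: eq_count => x /=.
    have [->|nxa] := eqVneq x a; first by rewrite orbT; apply/esym/pbP; apply/HA.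
    rewrite orbF; apply/pbP/pbP; first by case.
    by move=> H; split => //; apply/eqP.
  rewrite count_uniq_mem // mem_undup aP addn0 addn1 => ->.
  by [].
have cntB : count (fun b => pb (B b)) l = k.-1.
  rewrite -cw2 /cnt; apply: eq_count => x /=.
  apply/pbP/pbP.
    by move=> /HB [H1 H2]; split => //; rewrite trmx_mul refl_tr -mulmxA.
  by move=> [H1 H2]; apply/HB; split => //; move: H2; rewrite trmx_mul refl_tr -mulmxA.
set SB := filter (fun b => pb (B b)) l.
set SA := filter (fun b => pb (A' b)) l.
have phi_inj : {in SB &, injective phi}.
  move=> x y; rewrite /SB !mem_filter => /andP [/pbP hx _] /andP [/pbP hy _] e.
  by rewrite -(KB x hx).2 -(KB y hy).2 e.
have surj : forall b, A' b -> exists c, B c /\ phi c = b.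
  have [_ eqs] : (size (map phi SB) = size SA) * (map phi SB =i SA).
    apply: uniq_min_size.
  - by rewrite map_inj_in_uniq // /SB filter_uniq.
  - move=> x /mapP [c hc ->]; move: hc; rewrite /SB mem_filter => /andP [/pbP hc _].
    have [H1 _] := KB c hc.
    rewrite /SA mem_filter mem_undup; apply/andP; split; first by apply/pbP.
    by case: H1 => -[[]].
  - by rewrite size_map /SA /SB !size_filter cntA cntB.
  move=> b hb.
  have : b \in SA.
    by rewrite /SA mem_filter mem_undup; apply/andP; split; [apply/pbP | case: hb => -[[]]].
  rewrite -eqs => /mapP [c hc ->]; exists c; split => //.
  by move: hc; rewrite /SB mem_filter => /andP [/pbP].
have P1 : forall b, A b -> B (psi Phi Pi w a b).
  move=> b /HA' /surj [c [hc <-]]; by rewrite (KB c hc).2.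
have P3 : forall c, B c -> exists b, A b /\ psi Phi Pi w a b = c.
  move=> c hc; exists (phi c); have [H1 H2] := KB c hc; split => //; exact/HA'.
split => //.
- move=> b1 b2 /HA' /surj [c1 [h1 <-]] /HA' /surj [c2 [h2 <-]].
  by rewrite (KB c1 h1).2 (KB c2 h2).2 => ->.
- move=> [p [hp ep]].
  have einv : invmx w = w^T.
    have [wu _] := mulmx1_unit o2.
    by rewrite -[invmx w]mulmx1 -o2 mulmxA mulVmx // mul1mx.
  rewrite einv in ep.
  have psid : forall b, A' b -> psi Phi Pi w a b = b.
    move=> b [[bpos bneg] nba]; apply: psiF => -[d1 d2 d3]; apply: d3; apply/HA.
    split => //.
    set g := w^T *m b.
    have ngp : - g <> p.
      move=> egp; apply: nba.
      have : w *m g = w *m (w^T *m a) by rewrite ep -egp opprK.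
      by rewrite /g !mulmxA o2 !mul1mx.
    have dpg : dot p g = -1.
      by rewrite -[p]opprK -ep dotNl dot_orth ?trmxK // d1.
    have := refl_simple_pos h hs hp bneg ngp.
    rewrite reflE dotNr dpg opprK scale1r => H.
    by rewrite /is_neg mulmxBr ep -/g opprB addrC.
  move=> b; split.
  + move=> hb; have [b' [hb' e]] := P3 b hb.
    by rewrite -e psid //; apply/HA'.
  + move=> hb; rewrite -(psid b); first exact: P1.
    exact/HA'.
Qed.
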